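(* Let $n\geqslant 1$ and $r\geqslant 1$ be integers and let $S$ be a set of real $n\times n$ matrices, each of rank $r$, such that there exists $N$ with the property that every product $M_1M_2\cdots M_\ell$ with $\ell\geqslant N$ and $M_i\in S$ has rank at most $r-1$. Then every product $M_1M_2\cdots M_{2^{n+1}}$ of $2^{n+1}$ elements $M_i\in S$ has rank at most $r-1$. *)

(* Defs.v *)
From mathcomp Require Import all_boot all_algebra.
From Stdlib Require Reals.
From mathcomp Require Import Rstruct.
Notation R := Rdefinitions.R.
Set Implicit Arguments. Unset Strict Implicit. Unset Printing Implicit Defensive.
Local Open Scope ring_scope.

Definition mxprod (n : nat) (s : seq 'M[R]_n) : 'M[R]_n :=
  foldr (fun A B => A *m B) 1%:M s.

(* Main.v *)
Require Import Defs.
From mathcomp Require Import all_boot all_algebra all_fingroup.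
From mathcomp Require Import Rstruct.
From mathcomp Require Import zify.
Import GRing.Theory.
Local Open Scope ring_scope.

Section Key.
Variables (F : fieldType) (m r n : nat) (Y : 'I_m -> 'M[F]_(n,r)).

Definition Grow (g : {ffun 'I_r -> 'I_n}) : 'rV[F]_m := \row_a \det (rowsub g (Y a)).

Definition Qm : 'M[F]_(#|{set 'I_n}|, m) :=
  \matrix_k (if [pick g : {ffun 'I_r -> 'I_n} | injectiveb g && ([set x in codom g] == enum_val k)]
             is Some g then Grow g else 0).

Lemma Grow_sub g : (Grow g <= Qm)%MS.
Proof.
have [inj_g | ninj] := boolP (injectiveb g); last first.
  have -> : Grow g = 0.
    apply/rowP => a; rewrite !mxE.
    case/injectivePn: ninj => i [j nij eqij].
    by apply: (determinant_alternate nij) => k; rewrite !mxE eqij.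
  exact: sub0mx.
pose k := enum_rank [set x in codom g].
have : row k Qm = (if [pick g : {ffun 'I_r -> 'I_n} | injectiveb g && ([set x in codom g] == enum_val k)]
             is Some g then Grow g else 0).
  by apply/rowP => a; rewrite !mxE.
case: pickP => [g' /andP[inj_g' /eqP cod] | none]; last first.
  by have := none g; rewrite inj_g /k enum_rankK eqxx.
move=> rowk.
rewrite /k enum_rankK in cod.
have ex i : exists j, g' j == g i.
  have : g i \in [set x in codom g'] by rewrite cod inE codom_f.
  by rewrite inE => /codomP[j ->]; exists j.
pose f i := odflt i [pick j | g' j == g i].
have fE i : g' (f i) = g i.
  rewrite /f; case: pickP => [j /eqP // | none].
  by case: (ex i) => j; rewrite none.
have f_inj : injective f.
  by move=> i j eqf; apply: (injectiveP _ inj_g); rewrite -!fE eqf.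
pose s := perm f_inj.
have -> : Grow g = (-1) ^+ s *: Grow g'.
  apply/rowP => a; rewrite !mxE.
  have -> : rowsub g (Y a) = perm_mx s *m rowsub g' (Y a).
    rewrite -row_permE; apply/matrixP => i j; rewrite !mxE permE /=.
    by rewrite fE.
  by rewrite det_mulmx det_perm.
by apply: scalemx_sub; rewrite -rowk row_sub.
Qed.
End Key.

Lemma det_mul_expand (F : fieldType) r n (B : 'M[F]_(r,n)) (Y : 'M[F]_(n,r)) :
  \det (B *m Y) = \sum_(g : {ffun 'I_r -> 'I_n}) (\prod_i B i (g i)) * \det (rowsub g Y).
Proof.
rewrite /determinant.
transitivity (\sum_(s : 'S_r) \sum_(g : {ffun 'I_r -> 'I_n})
   (\prod_i B i (g i)) * ((-1) ^+ s * \prod_i Y (g i) (s i))).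
  apply: eq_bigr => s _.
  rewrite (eq_bigr (fun i => \sum_k B i k * Y k (s i))); last by move=> i _; rewrite mxE.
  rewrite bigA_distr_bigA /= mulr_sumr; apply: eq_bigr => g _.
  by rewrite big_split /= mulrCA.
rewrite exchange_big /=; apply: eq_bigr => g _.
rewrite mulr_sumr; apply: eq_bigr => s _.
congr (_ * (_ * _)).
by apply: eq_bigr => i _; rewrite mxE.
Qed.

Lemma key_bound (F : fieldType) m r n (B : 'I_m -> 'M[F]_(r,n)) (Y : 'I_m -> 'M[F]_(n,r)) :
  (forall a, \det (B a *m Y a) != 0) ->
  (forall a b : 'I_m, (a < b)%N -> \det (B b *m Y a) = 0) -> (m <= 2 ^ n)%N.
Proof.
move=> diag off.
pose G : 'M[F]_m := \matrix_(b, a) \det (B b *m Y a).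
have rG : \rank G = m.
  apply: mxrank_unit; rewrite unitmxE unitfE -det_tr det_trig.
    by apply/prodf_neq0 => i _; rewrite !mxE.
  apply/forallP => i; apply/forallP => j; apply/implyP => lij.
  by rewrite !mxE off.
have sGQ : (G <= @Qm F m r n Y)%MS.
  apply/row_subP => b.
  have -> : row b G = \sum_(g : {ffun 'I_r -> 'I_n}) (\prod_i B b i (g i)) *: @Grow F m r n Y g.
    apply/rowP => a; rewrite !mxE det_mul_expand summxE.
    by apply: eq_bigr => g _; rewrite !mxE.
  by apply: summx_sub => g _; apply: scalemx_sub; apply: Grow_sub.
have := mxrankS sGQ; rewrite rG => /leq_trans; apply.
apply: leq_trans (rank_leq_row _) _.
by rewrite -cardsT -powersetT card_powerset cardsT card_ord.
Qed.

Section Pair.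
Variables (F : fieldType) (n r : nat).
Definition BX (X : 'M[F]_n) : 'M[F]_(r, n) := pid_mx r *m row_ebase X.
Definition YZ (Z : 'M[F]_n) : 'M[F]_(n, r) := col_ebase Z *m pid_mx r.

Lemma rank_pair (X Z : 'M[F]_n) : \rank X = r -> \rank Z = r ->
  \rank (X *m Z) = \rank (BX X *m YZ Z).
Proof.
move=> rX rZ.
have rn : (r <= n)%N by rewrite -rX rank_leq_row.
have eX : X = (col_ebase X *m pid_mx r) *m BX X.
  rewrite /BX -mulmxA (mulmxA (pid_mx r : 'M[F]_(n,r))) (pid_mx_id _ _ _ (leqnn r)).
  by rewrite mulmxA -rX mulmx_ebase.
have eZ : Z = YZ Z *m (pid_mx r *m row_ebase Z).
  rewrite /YZ -mulmxA (mulmxA (pid_mx r : 'M[F]_(n,r))) (pid_mx_id _ _ _ (leqnn r)).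
  by rewrite mulmxA -rZ mulmx_ebase.
apply/eqP; rewrite eqn_leq; apply/andP; split.
  have -> : X *m Z = (col_ebase X *m pid_mx r) *m (BX X *m YZ Z) *m (pid_mx r *m row_ebase Z).
    by rewrite {1}eX {1}eZ !mulmxA.
  apply: leq_trans (mxrankM_maxl _ _) _.
  exact: mxrankM_maxr.
have eXZ : X *m Z = (col_ebase X *m pid_mx r) *m (BX X *m YZ Z) *m (pid_mx r *m row_ebase Z).
  by rewrite {1}eX {1}eZ !mulmxA.
have LL : (pid_mx r : 'M[F]_(r,n)) *m invmx (col_ebase X) *m col_ebase X *m (pid_mx r : 'M[F]_(n,r)) = 1%:M.
  rewrite -(mulmxA _ (invmx _)) mulVmx ?col_ebase_unit // mulmx1.
  by rewrite (pid_mx_id _ _ _ rn) pid_mx_1.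
have CC (M : 'M[F]_r) : M *m (pid_mx r : 'M[F]_(r,n)) *m row_ebase Z *m invmx (row_ebase Z) *m (pid_mx r : 'M[F]_(n,r)) = M.
  rewrite -(mulmxA _ (row_ebase Z)) mulmxV ?row_ebase_unit // mulmx1.
  by rewrite -mulmxA (pid_mx_id _ _ _ rn) pid_mx_1 mulmx1.
have -> : BX X *m YZ Z = (pid_mx r *m invmx (col_ebase X)) *m (X *m Z) *m (invmx (row_ebase Z) *m pid_mx r).
  by rewrite eXZ !mulmxA LL mul1mx -!mulmxA !mulmxA CC.
apply: leq_trans (mxrankM_maxl _ _) _.
exact: mxrankM_maxr.
Qed.

Lemma det_pair (X Z : 'M[F]_n) : \rank X = r -> \rank Z = r ->
  (\det (BX X *m YZ Z) != 0) = (\rank (X *m Z) == r).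
Proof.
move=> rX rZ; rewrite (@rank_pair X Z rX rZ) -unitfE -unitmxE -row_free_unit.
by [].
Qed.
End Pair.

Section Seqs.
Variables (n r : nat).
Implicit Types (s t : seq 'M[R]_n).

Definition erel (A B : 'M[R]_n) := \rank (A *m B) == r.

Lemma mxprod_cat s1 s2 : mxprod (s1 ++ s2) = mxprod s1 *m mxprod s2.
Proof. by elim: s1 => [|a s1 IH] /=; rewrite ?mul1mx // IH mulmxA. Qed.

Lemma rank_piece s i j : (\rank (mxprod s) <= \rank (mxprod (take j (drop i s))))%N.
Proof.
rewrite -{1}(cat_take_drop i s) -{1}(cat_take_drop j (drop i s)) !mxprod_cat.
apply: leq_trans (mxrankM_maxr _ _) _.
exact: mxrankM_maxl.
Qed.

Lemma chain x t : (forall M, M \in x :: t -> \rank M = r) -> path erel x t ->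
  \rank (x *m mxprod t) = r.
Proof.
elim: t x => [|y t IH] x hr /=.
  by move=> _; rewrite mulmx1 hr // mem_head.
case/andP => /eqP exy pt.
have ry : \rank (y *m mxprod t) = r.
  by apply: IH => // M hM; apply: hr; rewrite inE hM orbT.
apply/eqP; rewrite eqn_leq; apply/andP; split.
  by rewrite -(hr x (mem_head _ _)); exact: mxrankM_maxl.
have := mxrank_Frobenius x y (mxprod t).
rewrite exy ry (hr y); last by rewrite !inE eqxx orbT.
by rewrite leq_add2l mulmxA.
Qed.

Lemma pump x t : path erel x t -> erel (last x t) x ->
  forall k, path erel x (t ++ flatten (nseq k (x :: t))).
Proof.
move=> pt el; elim=> [|k IH]; first by rewrite cats0.
by rewrite /= cat_path pt /= el.
Qed.

Lemma mem_flatten_nseq (y : 'M[R]_n) k t : y \in flatten (nseq k t) -> y \in t.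
Proof. by elim: k => [|k IH] //=; rewrite mem_cat => /orP[// | /IH]. Qed.

Lemma size_flatten_nseq k t : size (flatten (nseq k t)) = (k * size t)%N.
Proof. by elim: k => [|k IH] //=; rewrite size_cat IH mulSn. Qed.
End Seqs.
Arguments mxprod_cat {n}. Arguments rank_piece {n}. Arguments chain {n r}. Arguments pump {n r}.
Arguments mem_flatten_nseq {n}. Arguments size_flatten_nseq {n}.

Theorem mainTheorem2 (n r : nat) (S : 'M[R]_n -> Prop) :
  (1 <= n)%N -> (1 <= r)%N ->
  (forall M, S M -> \rank M = r) ->
  (exists N : nat, forall s : seq 'M[R]_n,
      (N <= size s)%N -> (forall M, M \in s -> S M) ->
      (\rank (mxprod s) <= r.-1)%N) ->
  forall s : seq 'M[R]_n,
    size s = (2 ^ n.+1)%N -> (forall M, M \in s -> S M) ->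
    (\rank (mxprod s) <= r.-1)%N.
Proof.
move=> n1 r1 hS [N hN] s hsize hsin.
rewrite leqNgt; apply/negP => hgt.
have hr : (r <= \rank (mxprod s))%N by lia.
pose A : nat -> 'M[R]_n := fun i => nth 0 s i.
have hrank i : (i < (size s))%N -> \rank (A i) = r.
  by move=> hi; apply: hS; apply: hsin; apply: mem_nth.
have hrankM M : M \in s -> \rank M = r by move=> hM; apply: hS; apply: hsin.
have hdiag i : (i.+1 < (size s))%N -> erel n r (A i) (A i.+1).
  move=> hi; rewrite /erel eqn_leq; apply/andP; split.
    by rewrite -(hrank i) ?(ltnW hi) //; exact: mxrankM_maxl.
  apply: (leq_trans hr); apply: (leq_trans (rank_piece s i 2%N)).
  have -> : take 2%N (drop i s) = [:: A i; A i.+1].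
    by rewrite (drop_nth 0 (ltnW hi)) (drop_nth 0 hi) /= take0.
  by rewrite /mxprod /= mulmx1.
have sorted_s : sorted (erel n r) s.
  move: hdiag; rewrite /A.
  case: (s) => [|a s'] //= hd.
  by apply/(pathP 0) => i hi; exact: (hd i hi).
have hoff c b : (c <= b)%N -> (b < (size s))%N -> ~~ erel n r (A b) (A c).
  move=> hcb hbL; apply/negP => eb.
  pose u := take (b - c).+1 (drop c s).
  have hcL : (c < (size s))%N by apply: leq_ltn_trans hbL.
  pose t := take (b - c) (drop c.+1 s).
  have hu : u = A c :: t by rewrite /u (drop_nth 0).
  have su : sorted (erel n r) u by apply: take_sorted; apply: drop_sorted.
  have sizeu : size u = (b - c).+1.
    by rewrite size_takel // size_drop; lia.
  have lastu : last (A c) t = A b.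
    have -> : last (A c) t = last 0 u by rewrite hu.
    rewrite -nth_last sizeu /= /u nth_take // nth_drop.
    by rewrite /A subnKC.
  have memu M : M \in u -> M \in s by move=> /mem_take /mem_drop.
  rewrite hu /= in su.
  have hk := @pump n r _ _ su; rewrite lastu in hk; have {}hk := hk eb.
  have hc : \rank (A c *m mxprod (t ++ flatten (nseq N u))) = r.
    apply: (@chain n r); last by rewrite hu; exact: (hk N).
    move=> M; rewrite -cat_cons -hu mem_cat => /orP[/memu | /mem_flatten_nseq/memu];
      exact: hrankM.
  have Hlen : (N <= size (flatten (nseq N.+1 u)))%N.
    by rewrite size_flatten_nseq sizeu; nia.
  have Hin M : M \in flatten (nseq N.+1 u) -> S M.
    by move=> /mem_flatten_nseq/memu; apply: hsin.
  have := hN _ Hlen Hin.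
  have -> : mxprod (flatten (nseq N.+1 u)) = A c *m mxprod (t ++ flatten (nseq N u)).
    by rewrite /= hu.
  rewrite hc; lia.
pose m := (size s).-1.
have := @key_bound _ m r n (fun a => @BX _ n r (A a)) (fun a => @YZ _ n r (A a.+1)).
have hm (a : 'I_m) : (a.+1 < size s)%N by have := ltn_ord a; rewrite /m; lia.
move=> /(_ _ _)/Wrap; case.
- move=> a; rewrite det_pair.
  + exact: hdiag.
  + by apply: hrank; have := hm a; lia.
  + exact: hrank.
- move=> a b hab; apply/eqP; rewrite -[_ == 0]negbK det_pair.
  + apply: hoff => //; have := ltn_ord b; rewrite /m; lia.
  + apply: hrank; have := ltn_ord b; rewrite /m; lia.
  + exact: hrank.
move=> hle.
have h2 : (2 <= 2 ^ n)%N by rewrite -{1}(expn1 2) leq_pexp2l.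
move: hle; rewrite /m hsize expnS; lia.
Qed.
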